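(* Let $\mathcal{I}\in\mathrm{Ins}(\Omega,\mathcal{H},\mathcal{K})$ be an instrument and $\mathsf{B}\in\mathcal{O}(\Lambda,\mathcal{H})$ a POVM. Then for any measure-and-prepare instrument $\mathcal{J}^{\mathsf{B}}$ that measures $\mathsf{B}$, $\mathcal{I}$ is compatible with $\mathsf{B}$ if and only if $\mathcal{I}$ is compatible with $\mathcal{J}^{\mathsf{B}}$.
   Context: All Hilbert spaces are finite-dimensional and complex, and all outcome sets are finite. A POVM $\mathsf{B}\in\mathcal{O}(\Lambda,\mathcal{H})$ is a map $y\mapsto\mathsf{B}(y)$ to positive operators with $\sum_y\mathsf{B}(y)=I$. An instrument $\mathcal{I}\in\mathrm{Ins}(\Omega,\mathcal{H},\mathcal{K})$ is a family $(\mathcal{I}_x)_{x\in\Omega}$ of completely positive trace-nonincreasing linear maps $\mathcal{L}(\mathcal{H})\to\mathcal{L}(\mathcal{K})$ whose sum is trace preserving; its induced POVM $\mathsf{A}^{\mathcal{I}}$ is given by $\mathrm{tr}[\mathsf{A}^{\mathcal{I}}(x)\varrho]=\mathrm{tr}[\mathcal{I}_x(\varrho)]$. A measure-and-prepare instrument measuring $\mathsf{B}$ is an instrument $\mathcal{J}^{\mathsf{B}}\in\mathrm{Ins}(\Lambda,\mathcal{H},\mathcal{V})$ (for some Hilbert space $\mathcal{V}$) of the form $\mathcal{J}^{\mathsf{B}}_y(\varrho)=\mathrm{tr}[\mathsf{B}(y)\varrho]\xi_y$ for some states $\{\xi_y\}_{y\in\Lambda}$ on $\mathcal{V}$. Two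 instruments $\mathcal{I}\in\mathrm{Ins}(\Omega,\mathcal{H},\mathcal{K})$, $\mathcal{J}\in\mathrm{Ins}(\Lambda,\mathcal{H},\mathcal{V})$ are compatible if there is $\mathcal{G}\in\mathrm{Ins}(\Omega\times\Lambda,\mathcal{H},\mathcal{K}\otimes\mathcal{V})$ with $\sum_{x}\mathrm{tr}_{\mathcal{K}}[\mathcal{G}_{(x,y)}(\varrho)]=\mathcal{J}_y(\varrho)$ for all $y$ and $\sum_y\mathrm{tr}_{\mathcal{V}}[\mathcal{G}_{(x,y)}(\varrho)]=\mathcal{I}_x(\varrho)$ for all $x$, for all states $\varrho$. An instrument $\mathcal{I}\in\mathrm{Ins}(\Omega,\mathcal{H},\mathcal{K})$ and a POVM $\mathsf{B}\in\mathcal{O}(\Lambda,\mathcal{H})$ are compatible if there is $\mathcal{R}\in\mathrm{Ins}(\Omega\times\Lambda,\mathcal{H},\mathcal{K})$ with $\sum_y\mathcal{R}_{(x,y)}=\mathcal{I}_x$ for all $x$ and $\sum_x\mathsf{A}^{\mathcal{R}}(x,y)=\mathsf{B}(y)$ for all $y$. *)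

(* Defs.v *)
(* Finite-dimensional complex Hilbert spaces are modelled as
   C^n with C an arbitrary numClosedFieldType (e.g. the complex numbers);
   operators on C^n are square matrices 'M[C]_n, and C^k (x) C^v is C^(k*v)
   with the index pairing of mathcomp's mxvec_index. *)
From HB Require Import structures.
From mathcomp Require Import all_boot all_order all_algebra.
Set Implicit Arguments. Unset Strict Implicit. Unset Printing Implicit Defensive.
Import Order.TTheory GRing.Theory Num.Theory.
Local Open Scope ring_scope.

Section Quantum.
Variable C : numClosedFieldType.

Definition adjmx m n (A : 'M[C]_(m, n)) : 'M[C]_(n, m) := (map_mx Num.conj A)^T.

Definition psd n (A : 'M[C]_n) : Prop :=
  forall x : 'cV[C]_n, 0 <= (adjmx x *m A *m x) 0 0.

Definition is_state n (rho : 'M[C]_n) : Prop := psd rho /\ \tr rho = 1.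

(* inverse of the index pairing 'I_m * 'I_n -> 'I_(m*n) *)
Definition tidx m n (p : 'I_(m * n)) : 'I_m * 'I_n :=
  enum_val (cast_ord (esym (mxvec_cast m n)) p).

Definition ptrace_fst k v (X : 'M[C]_(k * v)) : 'M[C]_v :=
  \matrix_(c, d) \sum_(a < k) X (mxvec_index a c) (mxvec_index a d).
Definition ptrace_snd k v (X : 'M[C]_(k * v)) : 'M[C]_k :=
  \matrix_(a, b) \sum_(c < v) X (mxvec_index a c) (mxvec_index b c).

(* the map id_m (x) Phi : L(C^m (x) C^n) -> L(C^m (x) C^k) *)
Definition ampl m n k (Phi : 'M[C]_n -> 'M[C]_k) (X : 'M[C]_(m * n))
  : 'M[C]_(m * k) :=
  \matrix_(p, q)
    Phi (\matrix_(i, j) X (mxvec_index (tidx p).1 i) (mxvec_index (tidx q).1 j))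
        (tidx p).2 (tidx q).2.

Definition lin_map n k (Phi : 'M[C]_n -> 'M[C]_k) : Prop :=
  forall (a : C) (X Y : 'M[C]_n), Phi (a *: X + Y) = a *: Phi X + Phi Y.

Definition completely_positive n k (Phi : 'M[C]_n -> 'M[C]_k) : Prop :=
  forall (m : nat) (X : 'M[C]_(m * n)), psd X -> psd (ampl Phi X).

Definition trace_nonincreasing n k (Phi : 'M[C]_n -> 'M[C]_k) : Prop :=
  forall X : 'M[C]_n, psd X -> \tr (Phi X) <= \tr X.

Definition is_povm (L : finType) n (B : L -> 'M[C]_n) : Prop :=
  (forall y, psd (B y)) /\ \sum_(y : L) B y = 1%:M.

Definition is_instrument (O : finType) n k (I : O -> 'M[C]_n -> 'M[C]_k) : Prop :=
  (forall x, lin_map (I x) /\ completely_positive (I x)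
             /\ trace_nonincreasing (I x)) /\
  (forall X : 'M[C]_n, \tr (\sum_(x : O) I x X) = \tr X).

(* induced POVM: the unique A(x) with tr[A(x) X] = tr[I_x(X)] for all X
   (A(x)_{ij} = tr[I_x(E_{ji})]) *)
Definition induced_povm (O : finType) n k (I : O -> 'M[C]_n -> 'M[C]_k) (x : O)
  : 'M[C]_n := \matrix_(i, j) \tr (I x (delta_mx j i)).

Definition mp_instrument (L : finType) n v (B : L -> 'M[C]_n) (xi : L -> 'M[C]_v)
  (y : L) (rho : 'M[C]_n) : 'M[C]_v := \tr (B y *m rho) *: xi y.

Definition compatible_instruments (O L : finType) n k v
  (I : O -> 'M[C]_n -> 'M[C]_k) (J : L -> 'M[C]_n -> 'M[C]_v) : Prop :=
  exists G : (O * L)%type -> 'M[C]_n -> 'M[C]_(k * v),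
    is_instrument G /\
    forall rho : 'M[C]_n, is_state rho ->
      (forall y, \sum_(x : O) ptrace_fst (G (x, y) rho) = J y rho) /\
      (forall x, \sum_(y : L) ptrace_snd (G (x, y) rho) = I x rho).

Definition compatible_instrument_povm (O L : finType) n k
  (I : O -> 'M[C]_n -> 'M[C]_k) (B : L -> 'M[C]_n) : Prop :=
  exists R : (O * L)%type -> 'M[C]_n -> 'M[C]_k,
    is_instrument R /\
    (forall x (X : 'M[C]_n), \sum_(y : L) R (x, y) X = I x X) /\
    (forall y, \sum_(x : O) induced_povm R (x, y) = B y).

End Quantum.

(* Main.v *)
Require Import Defs.
From HB Require Import structures.
From mathcomp Require Import all_boot all_order all_algebra.
From mathcomp Require Import ring.
Set Implicit Arguments. Unset Strict Implicit. Unset Printing Implicit Defensive.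
Import Order.TTheory GRing.Theory Num.Theory.
Local Open Scope ring_scope.

Section H.
Variable C : numClosedFieldType.

Lemma tidx_mxvec m n (a : 'I_m) (b : 'I_n) : tidx (mxvec_index a b) = (a, b).
Proof. by rewrite /tidx /mxvec_index cast_ordK enum_rankK. Qed.

Lemma mxvec_tidx m n (p : 'I_(m * n)) : mxvec_index (tidx p).1 (tidx p).2 = p.
Proof. by case/mxvec_indexP: p => a b; rewrite tidx_mxvec. Qed.

Lemma sum_mxvec (V : nmodType) m n (F : 'I_(m * n) -> V) :
  \sum_p F p = \sum_a \sum_b F (mxvec_index a b).
Proof.
rewrite pair_big /=.
rewrite (reindex (fun ab : 'I_m * 'I_n => mxvec_index ab.1 ab.2)) //=.
exists (@tidx m n) => [[a b] _|p _] /=; first by rewrite tidx_mxvec.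
by rewrite mxvec_tidx.
Qed.


Lemma sumsel n (i : 'I_n) (F : 'I_n -> C) :
  \sum_a ((a == i)%:R * F a) = F i.
Proof.
rewrite (bigD1 i) //= eqxx mul1r big1 ?addr0 // => a /negPf ->; exact: mul0r.
Qed.

Lemma sumsel' n (i : 'I_n) (F : 'I_n -> C) :
  \sum_a (F a * (i == a)%:R) = F i.
Proof.
rewrite (bigD1 i) //= eqxx mulr1 big1 ?addr0 // => a; rewrite eq_sym => /negPf ->; exact: mulr0.
Qed.

Lemma sumselr n (i : 'I_n) (F : 'I_n -> C) :
  \sum_a (F a * (a == i)%:R) = F i.
Proof.
rewrite (bigD1 i) //= eqxx mulr1 big1 ?addr0 // => a /negPf ->; exact: mulr0.
Qed.

Lemma sum2sel N M (i : 'I_N) (j : 'I_M) (F : 'I_N -> 'I_M -> C) :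
  \sum_a \sum_b ((a == i)%:R * (b == j)%:R * F a b) = F i j.
Proof.
under eq_bigr => a _ do under eq_bigr => b _ do rewrite -mulrA.
under eq_bigr => a _ do rewrite -mulr_sumr.
by rewrite sumsel sumsel.
Qed.

Definition form n (A : 'M[C]_n) (x y : 'cV[C]_n) := (adjmx x *m A *m y) 0 0.

Lemma formE n (A : 'M[C]_n) x y :
  form A x y = \sum_a \sum_b (x a 0)^* * A a b * y b 0.
Proof.
rewrite /form mxE; under eq_bigr => b _ do rewrite mxE mulr_suml.
rewrite exchange_big /=; apply: eq_bigr => a _; apply: eq_bigr => b _.
by rewrite !mxE.
Qed.

Lemma psdE n (A : 'M[C]_n) : psd A <-> forall x, 0 <= form A x x.
Proof. by []. Qed.


Lemma psd0 n : psd (0 : 'M[C]_n).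
Proof. by move=> x; rewrite mulmx0 mul0mx mxE. Qed.

Lemma psdD n (A B : 'M[C]_n) : psd A -> psd B -> psd (A + B).
Proof.
move=> hA hB x; rewrite mulmxDr mulmxDl mxE; exact: addr_ge0.
Qed.

Lemma psd_sum (I : finType) n (F : I -> 'M[C]_n) :
  (forall i, psd (F i)) -> psd (\sum_i F i).
Proof.
move=> h; apply: (big_ind (@psd C n)); [exact: psd0| exact: psdD| by []].
Qed.

Lemma psd_reindex N M (Y : 'M[C]_N) (f : 'I_M -> 'I_N) :
  psd Y -> psd (\matrix_(p, q) Y (f p) (f q)).
Proof.
move=> hY z; set u : 'cV[C]_N := \col_a \sum_p ((f p == a)%:R * z p 0).
have := hY u; rewrite -/(form _ _ _) -/(form _ _ _) !formE.
suff E : \sum_a \sum_b (u a 0)^* * Y a b * u b 0 =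
   \sum_p \sum_q \sum_a \sum_b
     ((a == f p)%:R * (b == f q)%:R * ((z p 0)^* * Y a b * z q 0)).
  rewrite E => h; apply: le_trans h _; rewrite le_eqVlt; apply/orP; left; apply/eqP.
  by apply: eq_bigr => p _; apply: eq_bigr => q _; rewrite sum2sel mxE.
symmetry; under eq_bigr => p _ do rewrite exchange_big /=.
rewrite exchange_big /=; apply: eq_bigr => a _.
under eq_bigr => p _ do rewrite exchange_big /=.
rewrite exchange_big /=; apply: eq_bigr => b _; symmetry.
rewrite !mxE rmorph_sum !mulr_suml; apply: eq_bigr => p _.
rewrite mulr_sumr; apply: eq_bigr => q _.
by rewrite rmorphM rmorph_nat (eq_sym a) (eq_sym b); ring.
Qed.


Lemma formDl n (A : 'M[C]_n) x1 x2 y : form A (x1 + x2) y = form A x1 y + form A x2 y.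
Proof.
rewrite !formE -big_split /=; apply: eq_bigr => a _; rewrite -big_split /=.
by apply: eq_bigr => b _; rewrite mxE rmorphD /=; ring.
Qed.

Lemma formDr n (A : 'M[C]_n) x y1 y2 : form A x (y1 + y2) = form A x y1 + form A x y2.
Proof.
rewrite !formE -big_split /=; apply: eq_bigr => a _; rewrite -big_split /=.
by apply: eq_bigr => b _; rewrite mxE; ring.
Qed.

Lemma formZl n (A : 'M[C]_n) c x y : form A (c *: x) y = c^* * form A x y.
Proof.
rewrite !formE mulr_sumr; apply: eq_bigr => a _; rewrite mulr_sumr.
by apply: eq_bigr => b _; rewrite mxE rmorphM /=; ring.
Qed.

Lemma formZr n (A : 'M[C]_n) c x y : form A x (c *: y) = c * form A x y.
Proof.
rewrite !formE mulr_sumr; apply: eq_bigr => a _; rewrite mulr_sumr.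
by apply: eq_bigr => b _; rewrite mxE; ring.
Qed.

Lemma form_delta n (A : 'M[C]_n) i j :
  form A (delta_mx i 0) (delta_mx j 0) = A i j.
Proof.
rewrite formE.
under eq_bigr => a _ do under eq_bigr => b _ do rewrite !mxE !eqxx !andbT rmorph_nat.
under eq_bigr => a _ do under eq_bigr => b _ do rewrite -mulrA mulrC.
under eq_bigr => a _ do rewrite -mulr_suml.
under eq_bigr => a _ do rewrite sumselr.
by rewrite sumselr.
Qed.

Lemma psd_herm n (A : 'M[C]_n) : psd A -> forall i j, A j i = (A i j)^*.
Proof.
move=> hA i j.
pose e := fun k : 'I_n => (delta_mx k 0 : 'cV[C]_n).
have fexp c : form A (e i + c *: e j) (e i + c *: e j) =
   A i i + c * A i j + c^* * A j i + c^* * c * A j j.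
  by rewrite formDl !formDr !formZl !formZr !form_delta; ring.
have r c : (form A (e i + c *: e j) (e i + c *: e j))^* =
            form A (e i + c *: e j) (e i + c *: e j).
  exact/geC0_conj/hA.
have rii : (A i i)^* = A i i by rewrite -(form_delta A); exact/geC0_conj/hA.
have rjj : (A j j)^* = A j j by rewrite -(form_delta A); exact/geC0_conj/hA.
have r1 := r 1; have ri := r 'i.
rewrite fexp in r1; rewrite fexp in ri.
rewrite !rmorphD !rmorphM /= !rmorph1 !conjCK conjCi rii rjj in r1 ri.
suff hab : A i j = (A j i)^* by rewrite hab conjCK.
move: r1 ri; move: (A i i) (A j j) (A i j) (A j i) => x y a b r1 ri.
have I2 : 'i * 'i = -1 :> C by rewrite -expr2 sqrCi.
have two : (2%:R : C) != 0 by rewrite pnatr_eq0.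
apply/eqP; rewrite -subr_eq0 -(mulrI_eq0 _ (lregP two)); apply/eqP.
have -> : 2%:R * (a - b^*) =
   - ((x + 1 * a^* + 1 * b^* + 1 * 1 * y) - (x + 1 * a + 1 * b + 1 * 1 * y))
   + 'i * ((x + - 'i * a^* + 'i * b^* + 'i * - 'i * y) -
          (x + 'i * a + - 'i * b + - 'i * 'i * y))
   + (1 + 'i * 'i) * (a^* - b^* + a - b) by ring.
by rewrite r1 ri I2 !subrr oppr0 mulr0 !add0r mul0r.
Qed.



Local Open Scope sesquilinear_scope.

Lemma psd_decomp n (B : 'M[C]_n) : psd B ->
  exists (P : 'M[C]_n) (d : 'I_n -> C), (forall j, 0 <= d j) /\
    forall p q, B p q = \sum_j (P j p)^* * d j * P j q.
Proof.
move=> hB.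
have Bn : B \is normalmx.
  have hBt : B ^t* = B.
    by apply/matrixP => p q; rewrite !mxE (psd_herm hB q p).
  by apply/(@normalmxP C n B); rewrite hBt.
have BE := orthomx_spectralP Bn.
set P := spectralmx B in BE; set s := spectral_diag B in BE.
have Pu : P \is unitarymx := spectral_unitarymx B.
rewrite invmx_unitary // in BE.
have Bpq p q : B p q = \sum_j (P j p)^* * s 0 j * P j q.
  rewrite {1}BE mxE; apply: eq_bigr => j _; rewrite mxE.
  rewrite (bigD1 j) //= big1 ?addr0; last first.
    by move=> l /negPf hl; rewrite !mxE hl mulr0n mulr0.
  by rewrite !mxE eqxx mulr1n.
have PP j k : \sum_a P j a * (P k a)^* = (j == k)%:R.
  have := (unitarymxP Pu); move/matrixP => /(_ j k); rewrite !mxE => <-.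
  by apply: eq_bigr => a _; rewrite !mxE.
exists P, (fun j => s 0 j); split => //.
move=> j.
pose x : 'cV[C]_n := \col_l (P j l)^*.
have := hB x; rewrite -/(form _ _ _) formE.
suff -> : \sum_a \sum_b (x a 0)^* * B a b * x b 0 = s 0 j by [].
transitivity (\sum_k s 0 k * ((\sum_a P j a * (P k a)^*) * (\sum_b P k b * (P j b)^*))).
  under eq_bigr => a _ do under eq_bigr => b _ do rewrite Bpq !mxE conjCK mulr_sumr mulr_suml.
  under eq_bigr => a _ do rewrite exchange_big /=.
  rewrite exchange_big /=; apply: eq_bigr => k _.
  rewrite mulr_suml mulr_sumr; apply: eq_bigr => a _.
  rewrite mulr_sumr mulr_sumr; apply: eq_bigr => b _; ring.
under eq_bigr => k _ do rewrite !PP.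
rewrite (bigD1 j) //= eqxx big1 ?addr0 ?mulr1 //.
by move=> k /negPf; rewrite eq_sym => ->; rewrite mul0r mulr0.
Qed.


Lemma psd_schur M N V (Y : 'M[C]_N) (Q : 'M[C]_V) (f : 'I_M -> 'I_N) (g : 'I_M -> 'I_V) :
  psd Y -> psd Q -> psd (\matrix_(p, q) (Y (f p) (f q) * Q (g p) (g q))).
Proof.
move=> hY hQ z; have [P [d [d0 QE]]] := psd_decomp hQ.
have hR := psd_reindex f hY.
rewrite -/(form _ _ _) formE.
pose w j : 'cV[C]_M := \col_p (P j (g p) * z p 0).
suff -> : \sum_a \sum_b (z a 0)^* * (\matrix_(p, q) (Y (f p) (f q) * Q (g p) (g q))) a b * z b 0
   = \sum_j d j * form (\matrix_(p, q) Y (f p) (f q)) (w j) (w j).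
  by apply: sumr_ge0 => j _; apply: mulr_ge0 => //; exact: hR.
under [RHS]eq_bigr => j _ do rewrite formE mulr_sumr.
rewrite [RHS]exchange_big /=; apply: eq_bigr => a _.
under [RHS]eq_bigr => j _ do rewrite mulr_sumr.
rewrite [RHS]exchange_big /=; apply: eq_bigr => b _.
rewrite !mxE QE !mulr_sumr !mulr_suml; apply: eq_bigr => j _.
by rewrite !mxE rmorphM /=; ring.
Qed.


Definition linV n (V : lmodType C) (f : 'M[C]_n -> V) :=
  forall a X Y, f (a *: X + Y) = a *: f X + f Y.

Section Lin.
Variables (n : nat) (V : lmodType C) (f : 'M[C]_n -> V) (hf : linV f).

Lemma lin0 : f 0 = 0.
Proof.
have h := hf 1 0 0; rewrite scaler0 addr0 scale1r in h.
by apply: (addrI (f 0)); rewrite addr0 -h.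
Qed.

Lemma linD X Y : f (X + Y) = f X + f Y.
Proof. by have := hf 1 X Y; rewrite !scale1r. Qed.

Lemma linZ a X : f (a *: X) = a *: f X.
Proof. by rewrite -[a *: X]addr0 hf lin0 addr0. Qed.

Lemma linN X : f (- X) = - f X.
Proof. by rewrite -(scaleN1r X) linZ scaleN1r. Qed.

Lemma linB X Y : f (X - Y) = f X - f Y.
Proof. by rewrite linD linN. Qed.

Lemma lin_sum (I : finType) (F : I -> 'M[C]_n) : f (\sum_i F i) = \sum_i f (F i).
Proof. exact: (big_morph f linD lin0). Qed.

End Lin.

Lemma adjmxD m1 m2 (A B : 'M[C]_(m1, m2)) : adjmx (A + B) = adjmx A + adjmx B.
Proof. by apply/matrixP => i j; rewrite !mxE rmorphD. Qed.

Lemma adjmxZ m1 m2 c (A : 'M[C]_(m1, m2)) : adjmx (c *: A) = c^* *: adjmx A.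
Proof. by apply/matrixP => i j; rewrite !mxE rmorphM. Qed.

Lemma formZA n c (A : 'M[C]_n) x y : form (c *: A) x y = c * form A x y.
Proof.
rewrite !formE mulr_sumr; apply: eq_bigr => a _; rewrite mulr_sumr.
by apply: eq_bigr => b _; rewrite mxE; ring.
Qed.

Lemma psd_rank1 n (w : 'cV[C]_n) : psd (w *m adjmx w).
Proof.
move=> x; rewrite -/(form _ _ _) formE.
set t := \sum_a (x a 0)^* * w a 0.
suff -> : \sum_a \sum_b (x a 0)^* * (w *m adjmx w) a b * x b 0 = t * t^* by exact: mul_conjC_ge0.
rewrite /t rmorph_sum mulr_suml; apply: eq_bigr => a _; rewrite mulr_sumr.
apply: eq_bigr => b _; rewrite !mxE big_ord1 !mxE rmorphM /= (conjCK (x b 0)).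
have e0 : (0 : 'I_1) = ord0 by apply/val_inj.
by rewrite !e0; ring.
Qed.

Lemma agree_on_states n (V : lmodType C) (f g : 'M[C]_n -> V) :
  linV f -> linV g -> (forall rho, is_state rho -> f rho = g rho) ->
  forall X, f X = g X.
Proof.
move=> hf hg hs.
pose D X := f X - g X.
have hD : linV D.
  move=> a X Y; rewrite /D hf hg scalerBr opprD !addrA; congr (_ + _).
  by rewrite addrAC.
have D0 rho : is_state rho -> D rho = 0 by move=> /hs; rewrite /D => ->; rewrite subrr.
have Dw (w : 'cV[C]_n) : D (w *m adjmx w) = 0.
  set t := \tr (w *m adjmx w).
  have tE : t = \sum_a w a 0 * (w a 0)^*.
    by rewrite /t /mxtrace; apply: eq_bigr => a _; rewrite !mxE big_ord1 !mxE.
  have t0 : 0 <= t by rewrite tE; apply: sumr_ge0 => a _; exact: mul_conjC_ge0.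
  have [tz|tnz] := eqVneq t 0.
    have w0 : w = 0.
      apply/matrixP => a b; rewrite (ord1 b) mxE.
      move: tz; rewrite tE => tz.
      have := psumr_eq0P (fun i _ => mul_conjC_ge0 (w i 0)) tz (i:=a) isT.
      by move/eqP; rewrite mul_conjC_eq0 => /eqP.
    by rewrite w0 mul0mx (lin0 hD).
  have st : is_state (t^-1 *: (w *m adjmx w)).
    split; last by rewrite mxtraceZ -/t mulVf.
    move=> x; rewrite -/(form _ _ _) formZA; apply: mulr_ge0; first by rewrite invr_ge0.
    exact: psd_rank1.
  have := D0 _ st; rewrite (linZ hD) => /eqP; rewrite scaler_eq0 invr_eq0 (negPf tnz) /=.
  by move/eqP.
have Duv (u v : 'cV[C]_n) : D (u *m adjmx v) = 0.
  have h1 := Dw (u + v); have h2 := Dw (u + 'i *: v).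
  rewrite adjmxD mulmxDl !mulmxDr !(linD hD) Dw Dw add0r addr0 in h1.
  rewrite adjmxD adjmxZ mulmxDl !mulmxDr -!scalemxAl -!scalemxAr !(linD hD) !(linZ hD) 
    !Dw !scaler0 !add0r !addr0 in h2.
  move/eqP: h1; rewrite addr_eq0 => /eqP h1.
  rewrite h1 conjCi scaleNr scalerN opprK in h2.
  move/eqP: h2; rewrite -mulr2n -scaler_nat scaler_eq0 pnatr_eq0 /= scaler_eq0 (negPf (@neq0Ci C)) /=.
  by rewrite h1 => /eqP ->; rewrite oppr0.
move=> X; apply/eqP; rewrite -subr_eq0; apply/eqP.
rewrite -/(D X) (matrix_sum_delta X) (lin_sum hD); apply: big1 => i _.
rewrite (lin_sum hD); apply: big1 => j _.
have -> : delta_mx i j = (delta_mx i 0 : 'cV[C]_n) *m adjmx (delta_mx j 0 : 'cV[C]_n).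
  have -> : adjmx (delta_mx j 0 : 'cV[C]_n) = delta_mx 0 j.
    by apply/matrixP => a b; rewrite !mxE rmorph_nat andbC.
  by rewrite mul_delta_mx.
by rewrite (linZ hD) Duv scaler0.
Qed.


Definition tens k v (P : 'M[C]_k) (Q : 'M[C]_v) : 'M[C]_(k * v) :=
  \matrix_(p, q) (P (tidx p).1 (tidx q).1 * Q (tidx p).2 (tidx q).2).

Lemma tr_tens k v (P : 'M[C]_k) (Q : 'M[C]_v) : \tr (tens P Q) = \tr P * \tr Q.
Proof.
rewrite /mxtrace sum_mxvec mulr_suml; apply: eq_bigr => a _.
rewrite mulr_sumr; apply: eq_bigr => b _; by rewrite mxE tidx_mxvec.
Qed.

Lemma ptrace_snd_tens k v (P : 'M[C]_k) (Q : 'M[C]_v) :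
  ptrace_snd (tens P Q) = \tr Q *: P.
Proof.
apply/matrixP => a b; rewrite !mxE /mxtrace mulr_suml; apply: eq_bigr => c _.
by rewrite mxE !tidx_mxvec mulrC.
Qed.

Lemma ptrace_fst_tens k v (P : 'M[C]_k) (Q : 'M[C]_v) :
  ptrace_fst (tens P Q) = \tr P *: Q.
Proof.
apply/matrixP => a b; rewrite !mxE /mxtrace mulr_suml; apply: eq_bigr => c _.
by rewrite mxE !tidx_mxvec.
Qed.

Lemma tr_ptrace_snd k v (Y : 'M[C]_(k * v)) : \tr (ptrace_snd Y) = \tr Y.
Proof. by rewrite /mxtrace sum_mxvec; apply: eq_bigr => a _; rewrite mxE. Qed.

Lemma tr_ptrace_fst k v (Y : 'M[C]_(k * v)) : \tr (ptrace_fst Y) = \tr Y.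
Proof.
rewrite /mxtrace sum_mxvec exchange_big /=; apply: eq_bigr => a _; rewrite mxE.
by apply: eq_bigr.
Qed.

Lemma lin_ptrace_snd n k v (G : 'M[C]_n -> 'M[C]_(k * v)) :
  lin_map G -> lin_map (fun X => ptrace_snd (G X)).
Proof.
move=> hG a X Y; rewrite hG; apply/matrixP => i j; rewrite !mxE mulr_sumr -big_split /=.
by apply: eq_bigr => c _; rewrite !mxE.
Qed.

Lemma tr_mul_delta n (B : 'M[C]_n) i j : \tr (B *m delta_mx j i) = B i j.
Proof.
rewrite /mxtrace (bigD1 i) //= big1 ?addr0.
  rewrite mxE (bigD1 j) //= big1 ?addr0; first by rewrite mxE !eqxx mulr1.
  by move=> l /negPf hl; rewrite mxE hl mulr0.
by move=> l /negPf hl; rewrite mxE big1 // => c _; rewrite mxE hl andbF mulr0.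
Qed.

Lemma induced_tr n k (Phi : 'M[C]_n -> 'M[C]_k) (rho : 'M[C]_n) :
  lin_map Phi ->
  \tr ((\matrix_(i, j) \tr (Phi (delta_mx j i))) *m rho) = \tr (Phi rho).
Proof.
move=> hP.
have hT : linV (fun X => \tr (Phi X) : C^o).
  by move=> a X Y; rewrite hP mxtraceD mxtraceZ.
rewrite {2}(matrix_sum_delta rho) (lin_sum hT).
under [RHS]eq_bigr => i _ do rewrite (lin_sum hT).
rewrite [RHS]exchange_big /=.
rewrite [in LHS]/mxtrace; apply: eq_bigr => i _; rewrite mxE.
apply: eq_bigr => j _.
by rewrite (linZ hT) !mxE mulrC.
Qed.


Lemma tensDl k v a (P P' : 'M[C]_k) (Q : 'M[C]_v) :
  tens (a *: P + P') Q = a *: tens P Q + tens P' Q.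
Proof. by apply/matrixP => p q; rewrite !mxE; ring. Qed.

Lemma ampl_tens m n k v (R : 'M[C]_n -> 'M[C]_k) (Q : 'M[C]_v) (X : 'M[C]_(m * n)) :
  ampl (fun Y => tens (R Y) Q) X =
  \matrix_(p, q) (ampl R X (mxvec_index (tidx p).1 (tidx (tidx p).2).1)
                           (mxvec_index (tidx q).1 (tidx (tidx q).2).1)
                  * Q (tidx (tidx p).2).2 (tidx (tidx q).2).2).
Proof. by apply/matrixP => p q; rewrite /ampl !mxE !tidx_mxvec. Qed.

Lemma ampl_ptrace m n k v (G : 'M[C]_n -> 'M[C]_(k * v)) (X : 'M[C]_(m * n)) :
  ampl (fun Y => ptrace_snd (G Y)) X =
  \sum_e \matrix_(p, q) ampl G X (mxvec_index (tidx p).1 (mxvec_index (tidx p).2 e))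
                                 (mxvec_index (tidx q).1 (mxvec_index (tidx q).2 e)).
Proof.
apply/matrixP => p q; rewrite /ampl summxE !mxE; apply: eq_bigr => e _.
by rewrite !mxE !tidx_mxvec.
Qed.

End H.

Theorem proposition8 (C : numClosedFieldType) (O L : finType) (n k : nat)
  (I : O -> 'M[C]_n -> 'M[C]_k) (B : L -> 'M[C]_n) :
  is_instrument I -> is_povm B ->
  forall (v : nat) (xi : L -> 'M[C]_v), (forall y, is_state (xi y)) ->
  (compatible_instrument_povm I B <->
   compatible_instruments I (mp_instrument B xi)).
Proof.
move=> hI hB v xi hxi; split.
  move=> [R [hR [hRI hRB]]].
  exists (fun xy X => tens (R xy X) (xi xy.2)); split.
    split.
      move=> [x y] /=; have [hl [hc ht]] := hR.1 (x, y); split; last split.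
      - by move=> a X Y; rewrite hl tensDl.
      - move=> m X hX; rewrite ampl_tens; apply: psd_schur; first exact: hc.
        exact: (hxi y).1.
      - by move=> X hX; rewrite tr_tens (hxi y).2 mulr1; exact: ht.
    move=> X; rewrite raddf_sum /=.
    under eq_bigr => xy _ do rewrite tr_tens (hxi xy.2).2 mulr1.
    by rewrite -raddf_sum; exact: hR.2.
  move=> rho _; split.
    move=> y; under eq_bigr => x _ do rewrite ptrace_fst_tens.
    rewrite /= -scaler_suml /mp_instrument; congr (_ *: _).
    rewrite -hRB mulmx_suml raddf_sum; apply: eq_bigr => x _ /=.
    by rewrite induced_tr //; exact: (hR.1 (x, y)).1.
  move=> x; under eq_bigr => y _ do rewrite ptrace_snd_tens (hxi y).2 scale1r.
  exact: hRI.
move=> [G [hG hm]].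
exists (fun xy X => ptrace_snd (G xy X)); split.
  split.
    move=> xy; have [hl [hc ht]] := hG.1 xy; split; last split.
    - exact: lin_ptrace_snd.
    - move=> m X hX; rewrite ampl_ptrace; apply: psd_sum => e.
      exact/psd_reindex/hc.
    - by move=> X hX; rewrite tr_ptrace_snd; exact: ht.
  move=> X; rewrite raddf_sum /=.
  under eq_bigr => xy _ do rewrite tr_ptrace_snd.
  by rewrite -raddf_sum; exact: hG.2.
split.
  move=> x X.
  apply: (@agree_on_states C n _ (fun X => \sum_y ptrace_snd (G (x, y) X)) (I x)).
  - move=> a Y Z; rewrite scaler_sumr -big_split /=; apply: eq_bigr => y _.
    exact: (lin_ptrace_snd (hG.1 (x, y)).1).
  - exact: (hI.1 x).1.
  - by move=> rho hrho; exact: (hm rho hrho).2.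
move=> y; apply/matrixP => i j.
rewrite summxE; under eq_bigr => x _ do rewrite mxE tr_ptrace_snd.
rewrite -tr_mul_delta.
pose f := fun X : 'M[C]_n => (\sum_x \tr (G (x, y) X) : C^o).
pose g := fun X : 'M[C]_n => (\tr (B y *m X) : C^o).
apply: (@agree_on_states C n _ f g).
- move=> a Y Z; rewrite /f scaler_sumr -big_split /=; apply: eq_bigr => x _.
  by rewrite (hG.1 (x, y)).1 mxtraceD mxtraceZ.
- by move=> a Y Z; rewrite /g mulmxDr -scalemxAr mxtraceD mxtraceZ.
- move=> rho hrho; have := congr1 mxtrace ((hm rho hrho).1 y).
  rewrite raddf_sum /mp_instrument mxtraceZ (hxi y).2 mulr1 /f /g => <-.
  by apply: eq_bigr => x _ /=; symmetry; exact: tr_ptrace_fst.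
Qed.
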